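(* For integers $s,t\ge0$ and real polynomials $f,g$, let $$\langle f(x),g(y)\rangle_{s,t}=\int_{(0,1)\times(0,1)}\frac{x^sy^s}{x+y}f(x)g(y)\left(\frac{1-x}{1+x}\right)^t\left(\frac{1-y}{1+y}\right)^tdx\,dy,\qquad \mathcal L_{s,t}(f)=\sqrt2\int_0^1\frac{x^s}{1+x}f(x)\left(\frac{1-x}{1+x}\right)^tdx.$$ Then for all $s,t\ge0$ and all polynomials $f,g$: (1) $\langle f(x),g(y)\rangle_{s+1,t}=\langle xf(x),yg(y)\rangle_{s,t}$; (2) $\langle f(x),g(y)\rangle_{s,t+1}=\langle f(x),g(y)\rangle_{s,t}-\mathcal L_{s,t}(f)\,\mathcal L_{s,t}(g)$. *)

(* Defs.v *)
From HB Require Import structures.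
From mathcomp Require Import all_boot all_order all_algebra.
From mathcomp Require Import all_classical all_reals all_analysis.
Set Implicit Arguments. Unset Strict Implicit. Unset Printing Implicit Defensive.
Import Order.TTheory GRing.Theory Num.Theory.
Local Open Scope classical_set_scope.
Local Open Scope ring_scope.

Definition wgt (R : realType) (t : nat) (x : R) : R := ((1 - x) / (1 + x)) ^+ t.

Definition ipst (R : realType) (s t : nat) (f g : {poly R}) : R :=
  Rintegral ((@lebesgue_measure R) \x (@lebesgue_measure R))%E
    (`]0, 1[%classic `*` `]0, 1[%classic)
    (fun z : R * R => z.1 ^+ s * z.2 ^+ s / (z.1 + z.2) * f.[z.1] * g.[z.2]
                      * wgt t z.1 * wgt t z.2).

Definition Lst (R : realType) (s t : nat) (f : {poly R}) : R :=
  Num.sqrt 2 * Rintegral (@lebesgue_measure R) `]0, 1[%classic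
    (fun x : R => x ^+ s / (1 + x) * f.[x] * wgt t x).

(* Main.v *)
Require Import Defs.
From HB Require Import structures.
From mathcomp Require Import all_boot all_order all_algebra.
From mathcomp Require Import all_classical all_reals all_analysis.
From mathcomp Require Import measurable_realfun.
From mathcomp Require Import ring lra.
Import Order.TTheory GRing.Theory Num.Theory.
Import numFieldNormedType.Exports.
Local Open Scope classical_set_scope.
Local Open Scope ring_scope.

Lemma minv_pos (R : realType) : measurable_fun (`]0, +oo[%classic : set (measurableTypeR R)) (fun u : R => u^-1).
Proof.
apply: open_continuous_measurable_fun; first exact: interval_open.
move=> x; rewrite inE /= in_itv /= andbT => x0.
by apply: inv_continuous; rewrite gt_eqF.
Qed.

Lemma measurable_funV_pos d (T : measurableType d) (R : realType) (E : set T) (g : T -> R) :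
  measurable E -> measurable_fun E g -> (forall x, E x -> 0 < g x) ->
  measurable_fun E (fun x => (g x)^-1).
Proof.
move=> mE mg gpos.
have -> : (fun x => (g x)^-1) = (fun u : R => u^-1) \o g by [].
apply: (measurable_comp _ _ (minv_pos R) mg) => //.
by move=> _ [x Ex <-]; rewrite /= in_itv /= andbT gpos.
Qed.

Lemma poly_bound (R : realType) (p : {poly R}) :
  exists M : R, 0 <= M /\ forall x : R, 0 <= x <= 1 -> `|p.[x]| <= M.
Proof.
exists (\sum_(i < size p) `|p`_i|); split.
  by apply: sumr_ge0 => i _.
move=> x /andP[x0 x1]; rewrite horner_coef.
apply: (le_trans (ler_norm_sum _ _ _)); apply: ler_sum => i _.
rewrite normrM normrX (ger0_norm x0) -[leRHS]mulr1 ler_wpM2l //.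
exact: exprn_ile1.
Qed.

Lemma wgt_bound (R : realType) t (x : R) : 0 < x < 1 -> 0 <= wgt t x <= 1.
Proof.
move=> /andP[x0 x1]; rewrite /wgt.
have h0 : 0 <= (1 - x) / (1 + x) by apply: divr_ge0; lra.
have h1 : (1 - x) / (1 + x) <= 1 by rewrite ler_pdivrMr; lra.
by rewrite exprn_ge0 // exprn_ile1.
Qed.

Lemma m_wgt (R : realType) t : measurable_fun (`]0, 1[%classic : set (measurableTypeR R)) (@wgt R t).
Proof.
rewrite /wgt; apply: measurable_funX; apply: measurable_funM.
  apply: measurable_funB => //; exact: measurable_cst.
apply: measurable_funV_pos => //.
  apply: measurable_funD => //; exact: measurable_cst.
by move=> x /=; rewrite in_itv /= => /andP[x0 _]; lra.
Qed.

Lemma m_poly (R : realType) (p : {poly R}) (E : set (measurableTypeR R)) : measurable_fun E (horner p).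
Proof.
apply: (measurable_funS (E := setT)) => //.
apply: continuous_measurable_fun; exact: continuous_horner.
Qed.

Lemma exists_small (R : realType) (x : R) : 0 < x -> exists N : nat, (2^-1 : R) ^+ N <= x.
Proof.
move=> x0.
have hx : 0 <= x^-1 by rewrite invr_ge0 ltW.
have hb := archi_boundP hx; set b := Num.bound _ in hb.
exists b; rewrite exprVn -[leRHS]invrK lef_pV2 ?posrE ?exprn_gt0 ?invr_gt0 //.
apply: (le_trans (ltW hb)).
rewrite -natrX ler_nat; apply: ltnW; exact: ltn_expl.
Qed.

Lemma key_bound (R : realType) (N : nat) (x y : R) :
  0 < x < 1 -> 0 < y < 1 ->
  ~ (x < (2^-1) ^+ N /\ y < (2^-1) ^+ N) ->
  (x + y)^-1 <= \sum_(0 <= n < N) (2 ^+ n.+1 *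
     (if (x < (2^-1) ^+ n) && (y < (2^-1) ^+ n) then 1 else 0)).
Proof.
move=> /andP[x0 x1] /andP[y0 y1].
elim: N => [|N IH] nS.
  by exfalso; apply: nS; rewrite expr0.
rewrite big_nat_recr //=.
have sum_ge0 : 0 <= \sum_(0 <= n < N) (2 ^+ n.+1 *
     (if (x < (2^-1) ^+ n) && (y < (2^-1) ^+ n) then 1 else 0) : R).
  by apply: sumr_ge0 => n _; case: ifP => _; rewrite ?mulr1 ?mulr0 // exprn_ge0.
case: (boolP ((x < (2^-1) ^+ N) && (y < (2^-1) ^+ N))) => [/andP[xN yN]|hN].
  rewrite mulr1; apply: ler_wpDl => //.
  have rpos : 0 < (2^-1 : R) ^+ N.+1 by rewrite exprn_gt0 // invr_gt0.
  have hxy : (2^-1) ^+ N.+1 <= x + y.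
    have : ~ (x < (2^-1) ^+ N.+1 /\ y < (2^-1) ^+ N.+1) by [].
    case: (leP ((2^-1 : R) ^+ N.+1) x) => hx; first by move=> _; lra.
    case: (leP ((2^-1 : R) ^+ N.+1) y) => hy; first by move=> _; lra.
    by move=> H; exfalso; apply: H.
  rewrite -[2 ^+ N.+1]invrK -exprVn lef_pV2 ?posrE //.
  exact: (lt_le_trans rpos hxy).
rewrite mulr0 addr0; apply: IH => -[xN yN]; move: hN; by rewrite xN yN.
Qed.

Lemma int_k (R : realType) :
  ((@lebesgue_measure R) \x (@lebesgue_measure R))%E.-integrable
    (`]0, 1[%classic `*` `]0, 1[%classic)
    (EFin \o (fun z : measurableTypeR R * measurableTypeR R => (z.1 + z.2)^-1)).
Proof.
set mu := @lebesgue_measure R.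
set D := (`]0, 1[%classic `*` `]0, 1[%classic : set (measurableTypeR R * measurableTypeR R)).
have mD : measurable D by apply: measurableX.
set r := fun n : nat => (2^-1 : R) ^+ n.
have r0 n : 0 < r n by rewrite /r exprn_gt0 // invr_gt0.
set S := fun n => (`]0, r n[%classic `*` `]0, r n[%classic
   : set (measurableTypeR R * measurableTypeR R)).
have mS n : measurable (S n) by apply: measurableX.
have SD n : S n `<=` D.
  move=> [x y] [/=]; rewrite !in_itv /= => /andP[x0 xr] /andP[y0 yr].
  have r1 : r n <= 1 by rewrite /r exprn_ile1 // ?invr_ge0 // invf_le1 // ler1n.
  by split; rewrite /= in_itv /= ?x0 ?y0 /=; apply: (lt_le_trans _ r1).
have mk : measurable_fun D (fun z : measurableTypeR R * measurableTypeR R => (z.1 + z.2)^-1).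
  apply: measurable_funV_pos => //.
    apply: measurable_funD.
      by apply: (measurable_funS (E := setT)) => //; exact: measurable_fst.
    by apply: (measurable_funS (E := setT)) => //; exact: measurable_snd.
  move=> [x y] [/=]; rewrite !in_itv /= => /andP[x0 _] /andP[y0 _].
  by rewrite addr_gt0.
apply/integrableP; split; first exact/measurable_EFinP.
set t := fun n (z : measurableTypeR R * measurableTypeR R) =>
   ((2 ^+ n.+1 : R) * \1_(S n) z)%:E.
have t0 n z : (0 <= t n z)%E.
  by rewrite /t lee_fin mulr_ge0 // exprn_ge0.
have mt n : measurable_fun D (t n).
  apply/measurable_EFinP; apply: measurable_funM; first exact: measurable_cst.
  exact: measurable_indic.
have memS n (x y : R) : 0 < x -> 0 < y ->
    \1_(S n) (x, y) = (if (x < r n) && (y < r n) then 1 else 0 : R).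
  move=> x0 y0; rewrite indicE.
  case: (boolP ((x < r n) && (y < r n))) => [/andP[xr yr]|h].
    have hS : S n (x, y) by split; rewrite /= in_itv /= ?x0 ?y0 ?xr ?yr.
    by rewrite (mem_set hS).
  rewrite memNset //= => -[]; rewrite /= !in_itv /= => /andP[_ xr] /andP[_ yr].
  by move: h; rewrite xr yr.
apply: (le_lt_trans (y := (\int[mu \x mu]_(z in D) \sum_(n <oo) t n z)%E)).
  apply: ge0_le_integral => //.
  - by apply: measurableT_comp => //; exact/measurable_EFinP.
  - by apply: (ge0_emeasurable_sum (P := predT)) => //.
  move=> [x y] [/=]; rewrite !in_itv /= => xI yI.
  have [x0 _] := andP xI; have [y0 _] := andP yI.
  have [N hN] := @exists_small R x x0.
  have kb := @key_bound R N x y xI yI.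
  apply: (le_trans _ (nneseries_lim_ge N (fun n _ _ => t0 n (x, y)))).
  rewrite /t sumEFin /= lee_fin ger0_norm; last by rewrite invr_ge0 ltW // addr_gt0.
  apply: (le_trans (kb _)); first by move=> [xN _]; move: hN; rewrite leNgt xN.
  apply: ler_sum => n _; rewrite memS //.
rewrite integral_nneseries //.
have tI n : (\int[mu \x mu]_(z in D) t n z = (4 / (2 ^ (n + 1))%:R)%:E)%E.
  rewrite /t; under eq_integral do rewrite EFinM.
  rewrite ge0_integralZl_EFin //; last first.
    by apply/measurable_EFinP; exact: measurable_indic.
    rewrite integral_indic // setIidl //.
    set M := (X in (_ * X)%E).
    have -> : M = ((r n)%:E * (r n)%:E)%E.
      rewrite /M; apply: etrans.
        exact: (product_measure1E mu mu (measurable_itv _) (measurable_itv _)).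
      by congr (_ * _)%E; (apply: etrans; first exact: lebesgue_measure_itv); rewrite /= lte_fin r0 /= sube0.
    rewrite -!EFinM; congr EFin; rewrite natrX /r exprVn addn1 exprS.
    by field; rewrite expf_neq0.
rewrite (eq_eseriesr (fun n _ => tI n)).
move/cvg_lim: (@cvg_geometric_eseries_half R 4 0) => -> //.
exact: ltry.
Qed.

Lemma prod_int (R : realType) (A : set (measurableTypeR R)) (mA : measurable A) (u v : R -> R) :
  (@lebesgue_measure R).-integrable A (EFin \o u) ->
  (@lebesgue_measure R).-integrable A (EFin \o v) ->
  ((@lebesgue_measure R) \x (@lebesgue_measure R))%E.-integrable (A `*` A)
     (EFin \o (fun z : measurableTypeR R * measurableTypeR R => u z.1 * v z.2)) /\
  Rintegral ((@lebesgue_measure R) \x (@lebesgue_measure R))%E (A `*` A)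
     (fun z : measurableTypeR R * measurableTypeR R => u z.1 * v z.2)
   = Rintegral (@lebesgue_measure R) A u * Rintegral (@lebesgue_measure R) A v.
Proof.
move=> iu iv.
set mu := @lebesgue_measure R.
set u' := u \_ A; set v' := v \_ A.
have iu' : mu.-integrable setT (EFin \o u').
  rewrite /u' -restrict_EFin; exact: (integrable_mkcond _ mA).1 iu.
have iv' : mu.-integrable setT (EFin \o v').
  rewrite /v' -restrict_EFin; exact: (integrable_mkcond _ mA).1 iv.
have mu' : measurable_fun setT u'.
  by have /integrableP[/measurable_EFinP ? _] := iu'.
have mv' : measurable_fun setT v'.
  by have /integrableP[/measurable_EFinP ? _] := iv'.
set h := fun z : measurableTypeR R * measurableTypeR R => u' z.1 * v' z.2.
have hE : (fun z : measurableTypeR R * measurableTypeR R => u z.1 * v z.2) \_ (A `*` A) = h.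
  apply/funext => -[x y]; rewrite /h /u' /v' !patchE /=.
  case: (pselect (A x)) => ax; case: (pselect (A y)) => ay.
  - by rewrite (mem_set (ax : A x)) (mem_set (ay : A y)) (@mem_set _ (A `*` A) (x, y) (conj ax ay)).
  - rewrite (mem_set (ax : A x)) (memNset ay) mulr0.
    by rewrite (@memNset _ (A `*` A) (x, y)) // => -[].
  - rewrite (memNset ax) mul0r.
    by rewrite (@memNset _ (A `*` A) (x, y)) // => -[].
  - rewrite (memNset ax) mul0r.
    by rewrite (@memNset _ (A `*` A) (x, y)) // => -[].
have mh : measurable_fun setT h.
  apply: measurable_funM.
    exact: (measurableT_comp mu' measurable_fst).
  exact: (measurableT_comp mv' measurable_snd).
have mAA : measurable (A `*` A) by exact: measurableX.
have ih : (mu \x mu)%E.-integrable setT (EFin \o h).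
  apply/(integrable12ltyP mu mu); first exact/measurable_EFinP.
  have mau : measurable_fun setT (fun x => `|(u' x)%:E|%E).
    by apply: measurableT_comp => //; exact/measurable_EFinP.
  have mav : measurable_fun setT (fun x => `|(v' x)%:E|%E).
    by apply: measurableT_comp => //; exact/measurable_EFinP.
  rewrite (eq_integral (fun x => `|(u' x)%:E| * \int[mu]_y `|(v' y)%:E|)%E); last first.
    move=> x _; rewrite -ge0_integralZl //=.
    by apply: eq_integral => y _; rewrite /= /h /= normrM EFinM.
  under eq_integral do rewrite muleC.
  rewrite ge0_integralZl //; last exact: integral_ge0.
  have /integrableP[_ fu] := iu'.
  have /integrableP[_ fv] := iv'.
  rewrite lte_mul_pinfty //; first exact: integral_ge0.
  by rewrite ge0_fin_numE //; exact: integral_ge0.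
split.
  by apply/(integrable_mkcond _ mAA); rewrite restrict_EFin hE.
have -> : Rintegral (mu \x mu)%E (A `*` A) (fun z : measurableTypeR R * measurableTypeR R => u z.1 * v z.2) = Rintegral (mu \x mu)%E setT h.
  rewrite [LHS]Rintegral_mkcond; congr Rintegral; exact: hE.
rewrite (Rintegral_mkcond mu A u) (Rintegral_mkcond mu A v).
rewrite /Rintegral -(integral12_prod_meas1 ih) /fubini_F.
have fv := integrable_fin_num measurableT iv'.
have fu := integrable_fin_num measurableT iu'.
have inner : forall x, (\int[mu]_y (EFin \o h) (x, y) = (u' x)%:E * (fine (\int[mu]_y (v' y)%:E))%:E)%E.
  move=> x; rewrite fineK // -(integralZl measurableT iv').
  by apply: eq_integral => y _; rewrite /= /h EFinM.
transitivity (fine (\int[mu]_x ((u' x)%:E * (fine (\int[mu]_y (v' y)%:E))%:E))%E).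
  by congr fine; apply: eq_integral => x _; exact: inner.
rewrite integralZr // fineM //.
Qed.

Lemma part1 (R : realType) (s t : nat) (f g : {poly R}) :
  ipst (s.+1) t f g = ipst s t ('X * f) ('X * g).
Proof.
rewrite /ipst; congr Rintegral; apply/funext => -[x y] /=.
have H : forall a b c d e h k : R, a * a ^+ s * (b * b ^+ s) / c * d * e * h * k
   = a ^+ s * b ^+ s / c * (a * d) * (b * e) * h * k.
  by move=> *; ring.
by rewrite !hornerM !hornerX !exprS H.
Qed.

Lemma phi_bound (R : realType) s t (p : {poly R}) : exists M : R, 0 <= M /\
  forall x : R, 0 < x < 1 ->
  `|x ^+ s * p.[x] * wgt t x| <= M /\ `|x ^+ s / (1 + x) * p.[x] * wgt t x| <= M.
Proof.
have [M [M0 hM]] := poly_bound _ p.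
exists M; split => // x /andP[x0 x1].
have hp : `|p.[x]| <= M by apply: hM; rewrite !ltW.
have hxs : 0 <= x ^+ s <= 1.
  by apply/andP; split; [apply: exprn_ge0; exact: ltW | apply: exprn_ile1; exact: ltW].

have hw : 0 <= wgt t x <= 1 by apply: wgt_bound; rewrite x0 x1.
have hi : 0 <= (1 + x)^-1 <= 1.
  by rewrite invr_ge0 invf_le1; lra.
have hpn : 0 <= `|p.[x]| by [].
move: hxs hw hi => /andP[a0 a1] /andP[w0 w1] /andP[i0 i1].
rewrite !normrM (ger0_norm a0) (ger0_norm w0) (ger0_norm i0).
split.
  apply: (le_trans (y := 1 * M * 1)); last by rewrite mul1r mulr1.
  by apply: ler_pM; rewrite ?mulr_ge0 //; apply: ler_pM.
apply: (le_trans (y := 1 * 1 * M * 1)); last by rewrite !mul1r mulr1.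
apply: ler_pM; rewrite ?mulr_ge0 //; apply: ler_pM; rewrite ?mulr_ge0 //.
exact: ler_pM.
Qed.

Lemma m_phi (R : realType) s t (p : {poly R}) :
  measurable_fun (`]0, 1[%classic : set (measurableTypeR R))
    (fun x : R => x ^+ s / (1 + x) * p.[x] * wgt t x).
Proof.
apply: measurable_funM; last exact: m_wgt.
apply: measurable_funM; last exact: m_poly.
apply: measurable_funM; first exact: measurable_funX.
apply: measurable_funV_pos => //.
  apply: measurable_funD => //; exact: measurable_cst.
by move=> x /=; rewrite in_itv /= => /andP[x0 _]; lra.
Qed.

Lemma phi_int (R : realType) s t (p : {poly R}) :
  (@lebesgue_measure R).-integrable (`]0, 1[%classic : set (measurableTypeR R))
    (EFin \o (fun x : R => x ^+ s / (1 + x) * p.[x] * wgt t x)).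
Proof.
apply: measurable_bounded_integrable => //.
- apply: (le_lt_trans (y := 1%:E)); last exact: ltry.
  rewrite le_eqVlt; apply/orP; left; apply/eqP; apply: etrans.
    exact: lebesgue_measure_itv.
  by rewrite /= lte_fin ltr01 sube0.
- exact: m_phi.
have [M [M0 hM]] := phi_bound R s t p.
exists M; split; first by rewrite num_real.
move=> N MN x /= Ix; apply: (le_trans _ (ltW MN)).
by move: Ix; rewrite in_itv /= => Ix; exact: (hM x Ix).2.
Qed.

Lemma Ft_int (R : realType) s t (f g : {poly R}) :
  ((@lebesgue_measure R) \x (@lebesgue_measure R))%E.-integrable
    (`]0, 1[%classic `*` `]0, 1[%classic)
    (EFin \o (fun z : measurableTypeR R * measurableTypeR R =>
       z.1 ^+ s * z.2 ^+ s / (z.1 + z.2) * f.[z.1] * g.[z.2] * wgt t z.1 * wgt t z.2)).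
Proof.
set D := (`]0, 1[%classic `*` `]0, 1[%classic : set (measurableTypeR R * measurableTypeR R)).
have mD : measurable D by apply: measurableX.
have m1 (h : R -> R) : measurable_fun (`]0, 1[%classic : set (measurableTypeR R)) h ->
    measurable_fun D (fun z : measurableTypeR R * measurableTypeR R => h z.1).
  move=> mh; have -> : (fun z : measurableTypeR R * measurableTypeR R => h z.1) = h \o fst by [].
  apply: (measurable_comp _ _ mh) => //.
    by move=> _ [z [hz1 _] <-].
  by apply: (measurable_funS (E := setT)) => //; exact: measurable_fst.
have m2 (h : R -> R) : measurable_fun (`]0, 1[%classic : set (measurableTypeR R)) h ->
    measurable_fun D (fun z : measurableTypeR R * measurableTypeR R => h z.2).
  move=> mh; have -> : (fun z : measurableTypeR R * measurableTypeR R => h z.2) = h \o snd by [].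
  apply: (measurable_comp _ _ mh) => //.
    by move=> _ [z [_ hz2] <-].
  by apply: (measurable_funS (E := setT)) => //; exact: measurable_snd.
have mk : measurable_fun D (fun z : measurableTypeR R * measurableTypeR R => (z.1 + z.2)^-1).
  apply: measurable_funV_pos => //.
    apply: measurable_funD.
      by apply: (measurable_funS (E := setT)) => //; exact: measurable_fst.
    by apply: (measurable_funS (E := setT)) => //; exact: measurable_snd.
  move=> [x y] [/=]; rewrite !in_itv /= => /andP[x0 _] /andP[y0 _].
  by rewrite addr_gt0.
have mF : measurable_fun D (fun z : measurableTypeR R * measurableTypeR R =>
       z.1 ^+ s * z.2 ^+ s / (z.1 + z.2) * f.[z.1] * g.[z.2] * wgt t z.1 * wgt t z.2).
  apply: measurable_funM; last exact: (m2 (wgt t) (m_wgt R t)).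
  apply: measurable_funM; last exact: (m1 (wgt t) (m_wgt R t)).
  apply: measurable_funM; last exact: (m2 (horner g) (m_poly R g _)).
  apply: measurable_funM; last exact: (m1 (horner f) (m_poly R f _)).
  apply: measurable_funM; last exact: mk.
  apply: measurable_funM; [exact: (m1 (fun x => x ^+ s)) | exact: (m2 (fun x => x ^+ s))].
have [Mf [Mf0 hf]] := phi_bound R s t f.
have [Mg [Mg0 hg]] := phi_bound R s t g.
have ig := integrableZl mD (Mf * Mg) (int_k R).
apply: (le_integrable mD _ _ ig).
- exact/measurable_EFinP.
- move=> [x y] [/=]; rewrite !in_itv /= => xI yI.
  have [x0 _] := andP xI; have [y0 _] := andP yI.
  have E : x ^+ s * y ^+ s / (x + y) * f.[x] * g.[y] * wgt t x * wgt t y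
     = (x ^+ s * f.[x] * wgt t x) * (y ^+ s * g.[y] * wgt t y) * (x + y)^-1.
    by ring.
  rewrite /= lee_fin E !normrM (ger0_norm Mf0) (ger0_norm Mg0).
  rewrite ler_wpM2r //.
  apply: ler_pM => //; [have := (hf x xI).1 | have := (hg y yI).1]; by rewrite !normrM.
Qed.

Lemma alg_id (R : realType) (s : nat) (x y a b c d : R) : 0 < x -> 0 < y ->
  x ^+ s * y ^+ s / (x + y) * a * b * (c * ((1 - x) / (1 + x))) * (d * ((1 - y) / (1 + y)))
  = x ^+ s * y ^+ s / (x + y) * a * b * c * d
    - 2 * ((x ^+ s / (1 + x) * a * c) * (y ^+ s / (1 + y) * b * d)).
Proof.
move=> x0 y0.
have h1 : x + y != 0 by rewrite gt_eqF // addr_gt0.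
have h2 : 1 + x != 0 by rewrite gt_eqF // addr_gt0.
have h3 : 1 + y != 0 by rewrite gt_eqF // addr_gt0.
by field; rewrite h1 h2 h3.
Qed.

Theorem proposition2p2 (R : realType) (s t : nat) (f g : {poly R}) :
  ipst (s.+1) t f g = ipst s t ('X * f) ('X * g) /\
  ipst s (t.+1) f g = ipst s t f g - Lst s t f * Lst s t g.
Proof.
split; first exact: part1.
rewrite /ipst /Lst.
have mI : measurable (`]0, 1[%classic : set (measurableTypeR R)) by [].
have mD : measurable (`]0, 1[%classic `*` `]0, 1[%classic
   : set (measurableTypeR R * measurableTypeR R)) by apply: measurableX.
have [iH eH] := prod_int R _ mI _ _ (phi_int R s t f) (phi_int R s t g).
have iH2 := integrableZl mD 2 iH.
have iH2' : ((@lebesgue_measure R) \x (@lebesgue_measure R))%E.-integrable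
    (`]0, 1[%classic `*` `]0, 1[%classic)
    (EFin \o (fun z : measurableTypeR R * measurableTypeR R =>
       2 * ((z.1 ^+ s / (1 + z.1) * f.[z.1] * wgt t z.1) *
            (z.2 ^+ s / (1 + z.2) * g.[z.2] * wgt t z.2)))).
  by apply: (eq_integrable mD _ _ _ iH2) => z _; rewrite /= EFinM.
transitivity (Rintegral ((@lebesgue_measure R) \x (@lebesgue_measure R))%E
    (`]0, 1[%classic `*` `]0, 1[%classic)
    (fun z : measurableTypeR R * measurableTypeR R =>
       z.1 ^+ s * z.2 ^+ s / (z.1 + z.2) * f.[z.1] * g.[z.2] * wgt t z.1 * wgt t z.2
       - 2 * ((z.1 ^+ s / (1 + z.1) * f.[z.1] * wgt t z.1) *
            (z.2 ^+ s / (1 + z.2) * g.[z.2] * wgt t z.2)))).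
  apply: eq_Rintegral => -[x y] /set_mem [/=]; rewrite !in_itv /= => /andP[x0 _] /andP[y0 _].
  by rewrite /wgt !exprSr alg_id.
rewrite RintegralB //; last exact: Ft_int.
rewrite RintegralZl // eH.
have s2 : Num.sqrt 2 * Num.sqrt 2 = 2 :> R by rewrite -expr2 sqr_sqrtr // ler0n.
congr (_ - _).
by rewrite mulrACA s2.
Qed.
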